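(* Let $(G,\mathscr{T})$ be a Hausdorff topological group which is not $g$-reversible. Then there exists a Hausdorff group topology $\mathscr{T}'$ on $G$ such that $w(G,\mathscr{T}')\le nw(G,\mathscr{T})$ and $(G,\mathscr{T}')$ is not $g$-reversible.
   Context: All topological groups are assumed Hausdorff. A topological group $G$ is called $g$-reversible if every continuous automorphism of $G$ (i.e. every continuous group isomorphism of $G$ onto itself) is an open map. $w(X)$ denotes the weight of a space $X$ (minimal cardinality of a base) and $nw(X)$ its network weight (minimal cardinality of a network). *)

(* Defs.v *)
From Stdlib Require Import Classical.

Definition set (T : Type) := T -> Prop.

Definition subset {T} (A B : set T) := forall x, A x -> B x.

Definition is_topology {T : Type} (O : set (set T)) : Prop :=
  O (fun _ => True) /\
  (forall F : set (set T), (forall U, F U -> O U) ->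
      O (fun x => exists U, F U /\ U x)) /\
  (forall U V, O U -> O V -> O (fun x => U x /\ V x)).

Definition hausdorff {T : Type} (O : set (set T)) : Prop :=
  forall x y, x <> y -> exists U V, O U /\ O V /\ U x /\ V y /\
    forall z, ~ (U z /\ V z).

Definition is_group {G : Type} (mul : G -> G -> G) (inv : G -> G) (e : G) : Prop :=
  (forall x y z, mul x (mul y z) = mul (mul x y) z) /\
  (forall x, mul e x = x) /\
  (forall x, mul (inv x) x = e).

Definition group_topology {G : Type} (mul : G -> G -> G) (inv : G -> G)
    (O : set (set G)) : Prop :=
  is_topology O /\
  (forall x y W, O W -> W (mul x y) ->
     exists U V, O U /\ O V /\ U x /\ V y /\
       forall a b, U a -> V b -> W (mul a b)) /\
  (forall W, O W -> O (fun x => W (inv x))).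

Definition continuous {T : Type} (O : set (set T)) (f : T -> T) : Prop :=
  forall U, O U -> O (fun x => U (f x)).

Definition open_map {T : Type} (O : set (set T)) (f : T -> T) : Prop :=
  forall U, O U -> O (fun y => exists x, U x /\ f x = y).

Definition automorphism {G : Type} (mul : G -> G -> G) (f : G -> G) : Prop :=
  (forall x y, f (mul x y) = mul (f x) (f y)) /\
  (forall x y, f x = f y -> x = y) /\
  (forall y, exists x, f x = y).

Definition g_reversible {G : Type} (mul : G -> G -> G) (O : set (set G)) : Prop :=
  forall f, automorphism mul f -> continuous O f -> open_map O f.

Definition is_base {T : Type} (O : set (set T)) (B : set (set T)) : Prop :=
  (forall U, B U -> O U) /\
  (forall U x, O U -> U x -> exists V, B V /\ V x /\ subset V U).

Definition is_network {T : Type} (O : set (set T)) (N : set (set T)) : Prop :=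
  forall U x, O U -> U x -> exists V, N V /\ V x /\ subset V U.

Definition card_le {X Y : Type} (A : set X) (B : set Y) : Prop :=
  exists f : {x | A x} -> {y | B y}, forall a b, f a = f b -> a = b.

(* Main.v *)
From Stdlib Require Import Classical ClassicalEpsilon FunctionalExtensionality PropExtensionality Cantor.
From mathcomp Require classical_sets.
Require Import Defs.


Module ZornW.
Import classical_sets.
Local Open Scope classical_set_scope.
Lemma zorn_sets (T : Type) (P : (T -> Prop) -> Prop) :
 (forall F : (T->Prop) -> Prop, (forall X, F X -> P X) ->
    (forall X Y, F X -> F Y -> (forall t, X t -> Y t) \/ (forall t, Y t -> X t)) ->
    P (fun t => exists X, F X /\ X t)) ->
 exists A, P A /\ forall B, (forall t, A t -> B t) -> P B -> forall t, B t -> A t.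
Proof.
intros H.
destruct (@Zorn_bigcup T P) as [A [PA HA]].
- intros F FP Ftot. 
  assert (E : (\bigcup_(X in F) X) = (fun t => exists X, F X /\ X t)).
  { apply boolp.funext => t. apply boolp.propext. split.
    - intros [X FX Xt]. exists X. split; assumption.
    - intros [X [FX Xt]]. exists X; assumption. }
  rewrite E. apply H. { intros X FX. apply FP. exact FX. }
  intros X Y FX FY. destruct (Ftot X Y FX FY) as [h|h]; [left|right]; intros t; apply h.
- exists A. split; [exact PA|]. intros B AB PB t Bt.
  apply NNPP; intro nAt. apply (HA B); [|exact PB].
  split. { intros x; apply AB. } intro BA. apply nAt. apply BA. exact Bt.
Qed.
End ZornW.
Import ZornW.

Lemma min_card (I U : Type) (A : I -> U -> Prop) (i0 : I) :
  exists i, forall j, exists g : U -> U, (forall a, A i a -> A j (g a)) /\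
     (forall a b, A i a -> A i b -> g a = g b -> a = b).
Proof.
pose (P := fun S : (I -> U) -> Prop => (forall s, S s -> forall i, A i (s i)) /\
   (forall i s t, S s -> S t -> s i = t i -> s = t)).
destruct (zorn_sets (I -> U) P) as [S [[PS1 PS2] Smax]].
- intros F FP Ftot. split.
  + intros s [X [FX Xs]] i. apply (proj1 (FP X FX)). exact Xs.
  + intros i s t [X [FX Xs]] [Y [FY Yt]] E.
    destruct (Ftot X Y FX FY) as [h|h].
    * apply (proj2 (FP Y FY) i); auto.
    * apply (proj2 (FP X FX) i); auto.
- assert (Hsurj : exists i, forall a, A i a -> exists s, S s /\ s i = a).
  { apply NNPP; intro Hn.
    assert (H1 : forall i, exists a, A i a /\ forall s, S s -> s i <> a).
    { intro i. apply NNPP; intro H2. apply Hn. exists i. intros a Aa.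
      apply NNPP; intro H3. apply H2. exists a. split; [exact Aa|].
      intros s Ss E. apply H3. exists s. split; assumption. }
    pose (t := fun i => proj1_sig (constructive_indefinite_description _ (H1 i))).
    assert (Ht : forall i, A i (t i) /\ forall s, S s -> s i <> t i).
    { intro i. unfold t. destruct (constructive_indefinite_description _ (H1 i)) as [a Ha]. exact Ha. }
    assert (St : S t).
    { apply (Smax (fun s => S s \/ s = t)).
      - intros s Ss; left; exact Ss.
      - split.
        + intros s [Ss| ->] i. apply PS1; exact Ss. apply Ht.
        + intros i s u [Ss| ->] [Su| ->] E.
          * apply (PS2 i); assumption.
          * exfalso. apply (proj2 (Ht i) s Ss E).
          * exfalso. apply (proj2 (Ht i) u Su). symmetry; exact E.
          * reflexivity.
      - right; reflexivity. }
    apply (proj2 (Ht i0) t St). reflexivity. }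
  destruct Hsurj as [i Hi]. exists i. intro j.
  exists (fun a => match excluded_middle_informative (exists s, S s /\ s i = a) with
                   | left h => (proj1_sig (constructive_indefinite_description _ h)) j
                   | right _ => a end).
  split.
  + intros a Aa. destruct (excluded_middle_informative _) as [h|h].
    * pose proof (proj2_sig (constructive_indefinite_description _ h)) as [Ss _]. apply PS1; exact Ss.
    * exfalso. apply h. apply Hi. exact Aa.
  + intros a b Aa Ab.
    destruct (excluded_middle_informative _) as [h|h]; [|exfalso; apply h; apply Hi; exact Aa].
    destruct (excluded_middle_informative _) as [h'|h']; [|exfalso; apply h'; apply Hi; exact Ab].
    pose proof (proj2_sig (constructive_indefinite_description _ h)) as [Ss Es].
    pose proof (proj2_sig (constructive_indefinite_description _ h')) as [Ss' Es'].
    intro E. rewrite <- Es, <- Es'. rewrite (PS2 j _ _ Ss Ss' E). reflexivity.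
Qed.
Import ZornW.

Section Hess.
Variable U : Type.
Variable A : U -> Prop.
Variable s : nat -> U.
Hypothesis sA : forall n, A (s n).
Hypothesis sinj : forall m n, s m = s n -> m = n.

Definition Sd (R : (U*U)*U -> Prop) x := exists z, R ((x,x),z).
Definition Loc (R : (U*U)*U -> Prop) :=
  (forall x y z, R ((x,y),z) -> A x /\ A y /\ Sd R x /\ Sd R y /\ Sd R z) /\
  (forall x y, Sd R x -> Sd R y -> exists z, R ((x,y),z)) /\
  (forall x y z z', R ((x,y),z) -> R ((x,y),z') -> z = z') /\
  (forall x y z x' y', R ((x,y),z) -> R ((x',y'),z) -> x = x' /\ y = y').

Lemma Loc_ext R R' : (forall t, R t <-> R' t) -> Loc R -> Loc R'.
Proof.
intros E [L1 [L2 [L3 L4]]].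
assert (ES : forall x, Sd R x <-> Sd R' x).
{ intro x; split; intros [z Hz]; exists z; apply E; exact Hz. }
split; [|split; [|split]].
- intros x y z H. apply E in H. destruct (L1 x y z H) as [a [b [c [d f]]]].
  repeat split; try assumption; apply ES; assumption.
- intros x y Hx Hy. apply ES in Hx; apply ES in Hy. destruct (L2 x y Hx Hy) as [z Hz].
  exists z; apply E; exact Hz.
- intros x y z z' H H'. apply E in H; apply E in H'. eauto.
- intros x y z x' y' H H'. apply E in H; apply E in H'. eauto.
Qed.

Definition incl3 (R R' : (U*U)*U -> Prop) := forall t, R t -> R' t.

Lemma Loc_union (M : ((U*U)*U -> Prop) -> Prop) :
  (forall R, M R -> Loc R) ->
  (forall R R', M R -> M R' -> incl3 R R' \/ incl3 R' R) ->
  Loc (fun t => exists R, M R /\ R t).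
Proof.
intros HL Hc.
assert (SdU : forall x, Sd (fun t => exists R, M R /\ R t) x <-> exists R, M R /\ Sd R x).
{ intro x; split.
  - intros [z [R [MR Rz]]]. exists R. split; [exact MR|]. exists z; exact Rz.
  - intros [R [MR [z Rz]]]. exists z. exists R. split; assumption. }
split; [|split; [|split]].
- intros x y z [R [MR Rt]]. destruct (HL R MR) as [L1 _].
  destruct (L1 x y z Rt) as [a [b [c [d f]]]].
  repeat split; try assumption; apply SdU; exists R; split; assumption.
- intros x y Hx Hy. apply SdU in Hx; apply SdU in Hy.
  destruct Hx as [R1 [M1 [z1 S1]]]. destruct Hy as [R2 [M2 [z2 S2]]].
  destruct (Hc R1 R2 M1 M2) as [I|I].
  + destruct (proj1 (proj2 (HL R2 M2)) x y) as [z Hz].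
    * exists z1. apply I; exact S1.
    * exists z2; exact S2.
    * exists z. exists R2. split; assumption.
  + destruct (proj1 (proj2 (HL R1 M1)) x y) as [z Hz].
    * exists z1; exact S1.
    * exists z2. apply I; exact S2.
    * exists z. exists R1. split; assumption.
- intros x y z z' [R1 [M1 H1]] [R2 [M2 H2]].
  destruct (Hc R1 R2 M1 M2) as [I|I].
  + apply (proj1 (proj2 (proj2 (HL R2 M2))) x y); [apply I|]; assumption.
  + apply (proj1 (proj2 (proj2 (HL R1 M1))) x y); [|apply I]; assumption.
- intros x y z x' y' [R1 [M1 H1]] [R2 [M2 H2]].
  destruct (Hc R1 R2 M1 M2) as [I|I].
  + apply (proj2 (proj2 (proj2 (HL R2 M2))) x y z); [apply I|]; assumption.
  + apply (proj2 (proj2 (proj2 (HL R1 M1))) x y z); [|apply I]; assumption.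
Qed.

Definition R0 (t : (U*U)*U) := exists m n, t = ((s m, s n), s (Cantor.to_nat (m,n))).

Lemma Loc_R0 : Loc R0.
Proof.
assert (SdR0 : forall x, Sd R0 x <-> exists m, x = s m).
{ intro x; split.
  - intros [z [m [n E]]]. exists m. injection E; intros; assumption.
  - intros [m ->]. exists (s (Cantor.to_nat (m,m))). exists m, m. reflexivity. }
split; [|split; [|split]].
- intros x y z [m [n E]]. injection E; intros -> -> ->.
  repeat split; try apply sA; apply SdR0; eauto.
- intros x y Hx Hy. apply SdR0 in Hx; apply SdR0 in Hy.
  destruct Hx as [m ->]; destruct Hy as [n ->].
  exists (s (Cantor.to_nat (m,n))). exists m, n. reflexivity.
- intros x y z z' [m [n E]] [m' [n' E']].
  injection E as Ex Ey Ez. injection E' as Ex' Ey' Ez'. subst.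
  apply sinj in Ex'. apply sinj in Ey'. subst. reflexivity.
- intros x y z x' y' [m [n E]] [m' [n' E']].
 injection E as Ex Ey Ez. injection E' as Ex' Ey' Ez'. subst.
  apply sinj in Ez'. 
  assert (P : (m,n) = (m',n')).
  { assert (Q : Cantor.to_nat (m,n) = Cantor.to_nat (m',n')) by exact Ez'.
    pose proof (f_equal Cantor.of_nat Q) as P. rewrite (cancel_of_to (m,n)) in P. rewrite (cancel_of_to (m',n')) in P. exact P. }
  injection P as -> ->. split; reflexivity.
Qed.


Definition emi := excluded_middle_informative.

Lemma hess_main : exists p : U -> U -> U, (forall a b, A a -> A b -> A (p a b)) /\
  (forall a b a' b', A a -> A b -> A a' -> A b' -> p a b = p a' b' -> a = a' /\ b = b').
Proof.
pose (Q := fun E : (U*U)*U -> Prop => Loc (fun t => R0 t \/ E t)).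
destruct (zorn_sets _ Q) as [E [QE Emax]].
{ intros F FQ Fc.
  pose (M := fun R : (U*U)*U -> Prop => R = R0 \/ exists X, F X /\ R = (fun t => R0 t \/ X t)).
  apply (Loc_ext (fun t => exists R, M R /\ R t)).
  - intro t; split.
    + intros [R [[->|[X [FX ->]]] Rt]]; [left; exact Rt|].
      destruct Rt as [Rt|Xt]; [left; exact Rt|right; exists X; split; assumption].
    + intros [Rt|[X [FX Xt]]].
      * exists R0. split; [left; reflexivity|exact Rt].
      * exists (fun t => R0 t \/ X t). split; [right; exists X; split; [exact FX|reflexivity]|right; exact Xt].
  - apply Loc_union.
    + intros R [->|[X [FX ->]]]; [exact Loc_R0|exact (FQ X FX)].
    + intros R R' [->|[X [FX ->]]] [->|[Y [FY ->]]].
      * left; intros t h; exact h.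
      * left; intros t h; left; exact h.
      * right; intros t h; left; exact h.
      * destruct (Fc X Y FX FY) as [I|I]; [left|right]; intros t [h|h]; 
          try (left; exact h); right; apply I; exact h. }
pose (R := fun t => R0 t \/ E t).
assert (LR : Loc R) by exact QE.
pose (S := Sd R).
destruct LR as [L1 [L2 [L3 L4]]].
assert (SA : forall x, S x -> A x).
{ intros x [z Hz]. exact (proj1 (L1 _ _ _ Hz)). }
assert (Ss : forall n, S (s n)).
{ intro n. exists (s (Cantor.to_nat (n,n))). left. exists n, n. reflexivity. }
pose (hh := fun x y => match emi (exists z, R ((x,y),z)) with
                       | left H => proj1_sig (constructive_indefinite_description _ H)
                       | right _ => x end).
assert (hR : forall x y, S x -> S y -> R ((x,y), hh x y)).
{ intros x y Sx Sy. unfold hh. destruct (emi _) as [H|H].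
  - exact (proj2_sig (constructive_indefinite_description _ H)).
  - exfalso; apply H; apply L2; assumption. }
assert (hS : forall x y, S x -> S y -> S (hh x y)).
{ intros x y Sx Sy. destruct (L1 _ _ _ (hR x y Sx Sy)) as [_ [_ [_ [_ h]]]]. exact h. }
assert (hinj : forall x y x' y', S x -> S y -> S x' -> S y' -> hh x y = hh x' y' -> x = x' /\ y = y').
{ intros x y x' y' Sx Sy Sx' Sy' Eh. apply (L4 x y (hh x y) x' y').
  - apply hR; assumption.
  - rewrite Eh. apply hR; assumption. }
assert (s01 : s 0 <> s 1) by (intro h; apply sinj in h; discriminate).
assert (s02 : s 0 <> s 2) by (intro h; apply sinj in h; discriminate).
assert (s12 : s 1 <> s 2) by (intro h; apply sinj in h; discriminate).
destruct (min_card bool U (fun b x => if b then S x else (A x /\ ~ S x)) true) as [i Hi].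
destruct i.
- (* S injects into A \ S : contradiction *)
  exfalso.
  destruct (Hi false) as [g [gS ginj]]. simpl in gS.
  pose (S' := fun x => exists u, S u /\ g u = x).
  pose (ginv := fun x => match emi (exists u, S u /\ g u = x) with
                       | left H => proj1_sig (constructive_indefinite_description _ H)
                       | right _ => x end).
  assert (ginvP : forall x, S' x -> S (ginv x) /\ g (ginv x) = x).
  { intros x Hx. unfold ginv. destruct (emi _) as [H|H].
    - exact (proj2_sig (constructive_indefinite_description _ H)).
    - contradiction. }
  assert (disj : forall x, S' x -> ~ S x).
  { intros x [u [Su <-]]. exact (proj2 (gS u Su)). }
  pose (bs := fun x => if emi (S x) then x else ginv x).
  assert (bsS : forall x, S x \/ S' x -> S (bs x)).
  { intros x Hx. unfold bs. destruct (emi (S x)) as [h|h]; [exact h|].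
    destruct Hx as [Hx|Hx]; [contradiction|exact (proj1 (ginvP x Hx))]. }
  pose (cc := fun x y => if emi (S x) then s 0 else if emi (S y) then s 1 else s 2).
  assert (ccS : forall x y, S (cc x y)).
  { intros x y. unfold cc. destruct (emi (S x)); [|destruct (emi (S y))]; apply Ss. }
  assert (cceq : forall x y x' y', cc x y = cc x' y' -> ~ (S x /\ S y) -> ~ (S x' /\ S y') ->
            (S x <-> S x') /\ (S y <-> S y')).
  { intros x y x' y'. unfold cc.
    destruct (emi (S x)) as [a|a]; destruct (emi (S y)) as [b|b];
    destruct (emi (S x')) as [c|c]; destruct (emi (S y')) as [d|d]; intros Eq N N';
    try tauto; exfalso; try (apply s01; congruence); try (apply s02; congruence);
    try (apply s12; congruence). }
  assert (bseq : forall x x', S x \/ S' x -> S x' \/ S' x' -> (S x <-> S x') -> bs x = bs x' -> x = x').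
  { intros x x' Hx Hx' Hs. unfold bs. destruct (emi (S x)) as [a|a]; destruct (emi (S x')) as [b|b];
      try tauto. intro Eq. destruct Hx as [Hx|Hx]; [contradiction|]. destruct Hx' as [Hx'|Hx']; [contradiction|].
    rewrite <- (proj2 (ginvP x Hx)), <- (proj2 (ginvP x' Hx')). rewrite Eq. reflexivity. }
  pose (val := fun x y => g (hh (hh (bs x) (bs y)) (cc x y))).
  assert (valS' : forall x y, S x \/ S' x -> S y \/ S' y -> S' (val x y)).
  { intros x y Hx Hy. exists (hh (hh (bs x) (bs y)) (cc x y)). split; [|reflexivity].
    apply hS; [apply hS; apply bsS; assumption|apply ccS]. }
  pose (New := fun t : (U*U)*U => match t with ((x,y),z) =>
     (S x \/ S' x) /\ (S y \/ S' y) /\ ~ (S x /\ S y) /\ z = val x y end).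
  pose (R' := fun t => R t \/ New t).
  assert (SdR' : forall x, Sd R' x <-> S x \/ S' x).
  { intro x; split.
    - intros [z [Rt|Nt]]. + left. exists z. exact Rt. + exact (proj1 Nt).
    - intros [Sx|Sx]. + destruct Sx as [z Hz]. exists z. left; exact Hz.
      + exists (val x x). right. simpl. split; [right; exact Sx|]. split; [right; exact Sx|].
        split; [|reflexivity]. intros [h _]. exact (disj x Sx h). }
  assert (AS' : forall x, S x \/ S' x -> A x).
  { intros x [h|[u [Su <-]]]; [apply SA; exact h|exact (proj1 (gS u Su))]. }
  assert (LR' : Loc R').
  { split; [|split; [|split]].
    - intros x y z [Rt|Nt].
      + destruct (L1 _ _ _ Rt) as [a [b [c [d f]]]]. repeat split; try assumption; apply SdR'; left; assumption.
      + destruct Nt as [hx [hy [hn ->]]].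
        repeat split; try (apply AS'; assumption); try (apply SdR'; assumption).
        apply SdR'. right. apply valS'; assumption.
    - intros x y Hx Hy. apply SdR' in Hx; apply SdR' in Hy.
      destruct (classic (S x /\ S y)) as [[a b]|n].
      + destruct (L2 x y a b) as [z Hz]. exists z; left; exact Hz.
      + exists (val x y). right. simpl. repeat split; try assumption; reflexivity.
    - intros x y z z' [Rt|Nt] [Rt'|Nt'].
      + exact (L3 _ _ _ _ Rt Rt').
      + exfalso. destruct (L1 _ _ _ Rt) as [_ [_ [a [b _]]]]. exact (proj1 (proj2 (proj2 Nt')) (conj a b)).
      + exfalso. destruct (L1 _ _ _ Rt') as [_ [_ [a [b _]]]]. exact (proj1 (proj2 (proj2 Nt)) (conj a b)).
      + destruct Nt as [_ [_ [_ ->]]]. destruct Nt' as [_ [_ [_ ->]]]. reflexivity.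
    - intros x y z x' y' [Rt|Nt] [Rt'|Nt'].
      + exact (L4 _ _ _ _ _ Rt Rt').
      + exfalso. destruct (L1 _ _ _ Rt) as [_ [_ [_ [_ c]]]]. destruct Nt' as [hx [hy [hn Ez]]].
        apply (disj z); [rewrite Ez; apply valS'; assumption|exact c].
      + exfalso. destruct (L1 _ _ _ Rt') as [_ [_ [_ [_ c]]]]. destruct Nt as [hx [hy [hn Ez]]].
        apply (disj z); [rewrite Ez; apply valS'; assumption|exact c].
      + destruct Nt as [hx [hy [hn Ez]]]. destruct Nt' as [hx' [hy' [hn' Ez']]].
        rewrite Ez' in Ez. unfold val in Ez.
        apply ginj in Ez; [|apply hS; [apply hS; apply bsS; assumption|apply ccS]
                           |apply hS; [apply hS; apply bsS; assumption|apply ccS]].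
        destruct (hinj _ _ _ _ (hS _ _ (bsS x hx) (bsS y hy)) (ccS x y)
                    (hS _ _ (bsS x' hx') (bsS y' hy')) (ccS x' y') (eq_sym Ez)) as [E1 E2].
        destruct (hinj _ _ _ _ (bsS x hx) (bsS y hy) (bsS x' hx') (bsS y' hy') E1) as [E3 E4].
        destruct (cceq _ _ _ _ E2 hn hn') as [C1 C2].
        split; apply bseq; assumption. }
  assert (QB : Q (fun t => E t \/ New t)).
  { apply (Loc_ext R'); [|exact LR']. intro t. unfold R', R. tauto. }
  pose (x0 := g (s 0)).
  assert (S'x0 : S' x0) by (exists (s 0); split; [apply Ss|reflexivity]).
  assert (Et : E ((x0, x0), val x0 x0)).
  { apply (Emax (fun t => E t \/ New t)); [intros t h; left; exact h|exact QB|].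
    right. simpl. split; [right; exact S'x0|]. split; [right; exact S'x0|].
    split; [|reflexivity]. intros [h _]. exact (disj x0 S'x0 h). }
  apply (disj x0 S'x0). exists (val x0 x0). right. exact Et.
- destruct (Hi true) as [g [gS ginj]]. simpl in gS, ginj.
  pose (p0 := fun a => if emi (S a) then hh a (s 0) else hh (g a) (s 1)).
  assert (p0S : forall a, A a -> S (p0 a)).
  { intros a Aa. unfold p0. destruct (emi (S a)) as [h|h]; apply hS; auto. }
  assert (p0inj : forall a b, A a -> A b -> p0 a = p0 b -> a = b).
  { intros a b Aa Ab. unfold p0. destruct (emi (S a)) as [ha|ha]; destruct (emi (S b)) as [hb|hb];
      intro Eq.
    - exact (proj1 (hinj _ _ _ _ ha (Ss 0) hb (Ss 0) Eq)).
    - destruct (hinj _ _ _ _ ha (Ss 0) (gS b (conj Ab hb)) (Ss 1) Eq) as [_ h]. contradiction.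
    - destruct (hinj _ _ _ _ (gS a (conj Aa ha)) (Ss 1) hb (Ss 0) Eq) as [_ h]. symmetry in h. contradiction.
    - apply ginj; auto. exact (proj1 (hinj _ _ _ _ (gS a (conj Aa ha)) (Ss 1) (gS b (conj Ab hb)) (Ss 1) Eq)). }
  exists (fun a b => hh (p0 a) (p0 b)). split.
  + intros a b Aa Ab. apply SA. apply hS; apply p0S; assumption.
  + intros a b a' b' Aa Ab Aa' Ab' Eq.
    destruct (hinj _ _ _ _ (p0S a Aa) (p0S b Ab) (p0S a' Aa') (p0S b' Ab') Eq) as [E1 E2].
    split; apply p0inj; assumption.
Qed.
End Hess.

Section Grp.
Variables (G : Type) (mul : G -> G -> G) (inv : G -> G) (e : G).
Hypothesis Hgrp : is_group mul inv e.

Lemma g_assoc x y z : mul x (mul y z) = mul (mul x y) z.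
Proof. exact (proj1 Hgrp x y z). Qed.
Lemma g_idl x : mul e x = x.
Proof. exact (proj1 (proj2 Hgrp) x). Qed.
Lemma g_invl x : mul (inv x) x = e.
Proof. exact (proj2 (proj2 Hgrp) x). Qed.
Lemma g_invr x : mul x (inv x) = e.
Proof.
assert (H : mul (inv x) (mul x (inv x)) = inv x).
{ rewrite g_assoc, g_invl, g_idl. reflexivity. }
transitivity (mul (mul (inv (inv x)) (inv x)) (mul x (inv x))).
- rewrite g_invl, g_idl. reflexivity.
- rewrite <- g_assoc, H. apply g_invl.
Qed.
Lemma g_idr x : mul x e = x.
Proof. rewrite <- (g_invl x), g_assoc, g_invr, g_idl. reflexivity. Qed.
Lemma g_cancl x y : mul (inv x) (mul x y) = y.
Proof. rewrite g_assoc, g_invl, g_idl. reflexivity. Qed.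
Lemma g_cancr x y : mul x (mul (inv x) y) = y.
Proof. rewrite g_assoc, g_invr, g_idl. reflexivity. Qed.
Lemma g_lcan x y z : mul x y = mul x z -> y = z.
Proof. intro H. rewrite <- (g_cancl x y), H, g_cancl. reflexivity. Qed.
Lemma g_inv_uniq x y : mul x y = e -> y = inv x.
Proof. intro H. apply (g_lcan x). rewrite H, g_invr. reflexivity. Qed.
Lemma g_inv_inv x : inv (inv x) = x.
Proof. symmetry. apply g_inv_uniq. apply g_invl. Qed.
Lemma g_inv_mul x y : inv (mul x y) = mul (inv y) (inv x).
Proof. symmetry. apply g_inv_uniq. rewrite <- g_assoc, (g_assoc y), g_invr, g_idl, g_invr. reflexivity. Qed.
Lemma g_inv_e : inv e = e.
Proof. symmetry; apply g_inv_uniq. apply g_idl. Qed.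
Lemma g_cancl' x y : mul x (mul (inv x) y) = y.
Proof. apply g_cancr. Qed.
Lemma g_cancr2 x y : mul (mul x y) (inv y) = x.
Proof. rewrite <- g_assoc, g_invr, g_idr. reflexivity. Qed.
End Grp.

Ltac gs Hg := repeat first [ rewrite (g_inv_mul _ _ _ _ Hg) | rewrite (g_inv_inv _ _ _ _ Hg) | rewrite (g_inv_e _ _ _ _ Hg)
  | rewrite <- (g_assoc _ _ _ _ Hg) | rewrite (g_invl _ _ _ _ Hg) | rewrite (g_invr _ _ _ _ Hg) | rewrite (g_idl _ _ _ _ Hg)
  | rewrite (g_idr _ _ _ _ Hg) | rewrite (g_cancl _ _ _ _ Hg) | rewrite (g_cancr _ _ _ _ Hg) ].
Ltac gsin Hg H := repeat first [ rewrite (g_inv_mul _ _ _ _ Hg) in H | rewrite (g_inv_inv _ _ _ _ Hg) in H | rewrite (g_inv_e _ _ _ _ Hg) in H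
  | rewrite <- (g_assoc _ _ _ _ Hg) in H | rewrite (g_invl _ _ _ _ Hg) in H | rewrite (g_invr _ _ _ _ Hg) in H | rewrite (g_idl _ _ _ _ Hg) in H
  | rewrite (g_idr _ _ _ _ Hg) in H | rewrite (g_cancl _ _ _ _ Hg) in H | rewrite (g_cancr _ _ _ _ Hg) in H ].

Section Top.
Variables (G : Type) (mul : G -> G -> G) (inv : G -> G) (e : G).
Hypothesis Hgrp : is_group mul inv e.
Variable T : set (set G).
Hypothesis HT : group_topology mul inv T.
Hypothesis HH : hausdorff T.

Lemma test x y : mul (inv (mul x y)) (mul x (mul y e)) = e.
Proof. gs Hgrp. reflexivity. Qed.

Lemma open_local (W : set G) :
  (forall x, W x -> exists O, T O /\ O x /\ forall y, O y -> W y) -> T W.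
Proof.
intro H. destruct HT as [[_ [Hu _]] _].
assert (E : W = (fun x => exists U, (fun O => T O /\ forall y, O y -> W y) U /\ U x)).
{ apply functional_extensionality; intro x; apply propositional_extensionality; split.
  - intro Wx. destruct (H x Wx) as [O [TO [Ox OW]]]. exists O. auto.
  - intros [U [[_ UW] Ux]]. auto. }
rewrite E. apply Hu. intros U [TU _]; exact TU.
Qed.

Lemma open_whole : T (fun _ => True).
Proof. exact (proj1 (proj1 HT)). Qed.
Lemma open_inter U V : T U -> T V -> T (fun x => U x /\ V x).
Proof. exact (proj2 (proj2 (proj1 HT)) U V). Qed.
Lemma open_inv W : T W -> T (fun x => W (inv x)).
Proof. exact (proj2 (proj2 HT) W). Qed.

Lemma open_ltr (W : set G) a : T W -> T (fun y => W (mul a y)).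
Proof.
intro TW. apply open_local. intros y Wy.
destruct (proj1 (proj2 HT) a y W TW Wy) as [U [V [TU [TV [Ua [Vy H]]]]]].
exists V. repeat split; auto.
Qed.

Lemma open_rtr (W : set G) a : T W -> T (fun y => W (mul y a)).
Proof.
intro TW. apply open_local. intros y Wy.
destruct (proj1 (proj2 HT) y a W TW Wy) as [U [V [TU [TV [Uy [Va H]]]]]].
exists U. repeat split; auto.
Qed.


Definition nbhd (V : set G) := T V /\ V e.

Definition HP (V V' : set G) := forall a b, V' a -> V' b ->
  V (mul a b) /\ V (mul a (inv b)) /\ V (mul (inv a) b).

Lemma HP_exists V : nbhd V -> exists V', nbhd V' /\ HP V V'.
Proof.
intros [TV Ve].
assert (Vee : V (mul e e)) by (rewrite (g_idl _ _ _ _ Hgrp); exact Ve).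
destruct (proj1 (proj2 HT) e e V TV Vee) as [U1 [U2 [TU1 [TU2 [U1e [U2e H]]]]]].
exists (fun x => (U1 x /\ U2 x) /\ (U1 (inv x) /\ U2 (inv x))).
split.
- split.
  + apply open_inter; apply open_inter; try assumption; apply open_inv; assumption.
  + rewrite (g_inv_e _ _ _ _ Hgrp). tauto.
- intros a b [[a1 a2] [a3 a4]] [[b1 b2] [b3 b4]]. repeat split; apply H; assumption.
Qed.

Definition half (V : set G) : set G :=
  match emi (exists V', nbhd V' /\ HP V V') with
  | left H => proj1_sig (constructive_indefinite_description _ H)
  | right _ => fun _ => True end.

Lemma half_nbhd V : nbhd (half V).
Proof.
unfold half. destruct (emi _) as [H|H].
- exact (proj1 (proj2_sig (constructive_indefinite_description _ H))).
- split; [exact open_whole|exact I].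
Qed.

Lemma half_prop V : nbhd V -> HP V (half V).
Proof.
intro NV. unfold half. destruct (emi _) as [H|H].
- exact (proj2 (proj2_sig (constructive_indefinite_description _ H))).
- exfalso. apply H. apply HP_exists. exact NV.
Qed.

Lemma half_sub V : nbhd V -> forall a, half V a -> V a.
Proof.
intros NV a Ha. destruct (half_prop V NV a e Ha (proj2 (half_nbhd V))) as [H _].
rewrite (g_idr _ _ _ _ Hgrp) in H. exact H.
Qed.

Definition sepset (b : set G) : set G :=
  match emi (exists O, nbhd O /\ forall x, b x -> ~ O x) with
  | left H => proj1_sig (constructive_indefinite_description _ H)
  | right _ => fun _ => True end.

Lemma sepset_nbhd b : nbhd (sepset b).
Proof.
unfold sepset. destruct (emi _) as [H|H].
- exact (proj1 (proj2_sig (constructive_indefinite_description _ H))).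
- split; [exact open_whole|exact I].
Qed.

Lemma sepset_prop b : (exists O, nbhd O /\ forall x, b x -> ~ O x) -> forall x, b x -> ~ sepset b x.
Proof.
intro Hx. unfold sepset. destruct (emi _) as [H|H].
- exact (proj2 (proj2_sig (constructive_indefinite_description _ H))).
- contradiction.
Qed.

Definition conjset (X : set G) (d : G) : set G :=
  fun u => X (mul d (mul u (inv d))) /\ X (mul d (mul (inv u) (inv d))).

Lemma conjset_nbhd X d : nbhd X -> nbhd (conjset X d).
Proof.
intros [TX Xe]. split.
- apply open_inter.
  + apply (open_rtr (fun y => X (mul d y))). apply open_ltr. exact TX.
  + apply (open_inv (fun y => X (mul d (mul y (inv d))))).
    apply (open_rtr (fun y => X (mul d y))). apply open_ltr. exact TX.
- unfold conjset. gs Hgrp. split; exact Xe.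
Qed.

Definition pick (b : set G) : G :=
  match emi (exists x, b x) with
  | left H => proj1_sig (constructive_indefinite_description _ H)
  | right _ => e end.

Lemma pick_in b : (exists x, b x) -> b (pick b).
Proof.
intro Hx. unfold pick. destruct (emi _) as [H|H].
- exact (proj2_sig (constructive_indefinite_description _ H)).
- contradiction.
Qed.

Lemma get_U1 : ~ g_reversible mul T -> exists f, automorphism mul f /\ continuous T f /\
  exists U1, T U1 /\ U1 e /\ forall O, T O -> O e -> ~ (forall y, O y -> exists x, U1 x /\ f x = y).
Proof.
intro Hnr. unfold g_reversible in Hnr.
apply not_all_ex_not in Hnr. destruct Hnr as [f Hnf].
apply imply_to_and in Hnf. destruct Hnf as [Hf Hnf].
apply imply_to_and in Hnf. destruct Hnf as [Hfc Hno].
exists f. split; [exact Hf|]. split; [exact Hfc|].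
unfold open_map in Hno. apply not_all_ex_not in Hno. destruct Hno as [U0 Hno].
apply imply_to_and in Hno. destruct Hno as [TU0 Hno].
assert (Hy : exists y0, (exists x, U0 x /\ f x = y0) /\ forall O, T O -> O y0 ->
            ~ (forall y, O y -> exists x, U0 x /\ f x = y)).
{ apply NNPP; intro H1. apply Hno. apply open_local. intros y Hy0.
  apply NNPP; intro H2. apply H1. exists y. split; [exact Hy0|].
  intros O TO Oy HO. apply H2. exists O. split; [exact TO|split; [exact Oy|exact HO]]. }
destruct Hy as [y0 [[x0 [Ux0 <-]] Hy0]].
exists (fun u => U0 (mul x0 u)). split; [apply open_ltr; exact TU0|].
split; [rewrite (g_idr _ _ _ _ Hgrp); exact Ux0|].
intros O TO Oe HO.
apply (Hy0 (fun y => O (mul (inv (f x0)) y))).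
- apply open_ltr. exact TO.
- rewrite (g_invl _ _ _ _ Hgrp). exact Oe.
- intros y Oy. destruct (HO _ Oy) as [x [Ux fx]]. exists (mul x0 x). split; [exact Ux|].
  rewrite (proj1 Hf). rewrite fx. gs Hgrp. reflexivity.
Qed.

Section Seq.
Variable N0 : set (set G).
Hypothesis HN0 : is_network T N0.
Hypothesis ND : forall O, T O -> O e -> exists x, O x /\ x <> e.

Definition step_prop (O : set G) (p : set G * set G) :=
  N0 (fst p) /\ (exists x, fst p x) /\ (forall x, fst p x -> O x) /\ nbhd (snd p) /\
  (forall x, snd p x -> O x) /\ (forall x, fst p x -> ~ snd p x).

Lemma step_ex O : exists p, nbhd O -> step_prop O p.
Proof.
destruct (classic (nbhd O)) as [[TO Oe]|n]; [|exists (O,O); intro; contradiction].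
destruct (ND O TO Oe) as [x [Ox ne]].
destruct (HH e x (fun h => ne (eq_sym h))) as [P [Q [TP [TQ [Pe [Qx D]]]]]].
destruct (HN0 (fun z => O z /\ Q z) x (open_inter _ _ TO TQ) (conj Ox Qx)) as [b [Nb [bx bOQ]]].
exists (b, fun z => P z /\ O z). intros _. unfold step_prop; simpl.
split; [exact Nb|]. split; [exists x; exact bx|]. split; [intros z hz; exact (proj1 (bOQ z hz))|].
split; [split; [apply open_inter; assumption|split; assumption]|].
split; [intros z [_ hz]; exact hz|].
intros z bz [Pz _]. apply (D z). split; [exact Pz|exact (proj2 (bOQ z bz))].
Qed.

Definition stepf (O : set G) : set G * set G := proj1_sig (constructive_indefinite_description _ (step_ex O)).

Fixpoint Os (n : nat) : set G := match n with 0 => fun _ => True | S m => snd (stepf (Os m)) end.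
Definition sq (n : nat) : set G := fst (stepf (Os n)).

Lemma Os_nbhd n : nbhd (Os n).
Proof.
induction n; simpl.
- split; [exact open_whole|exact I].
- exact (proj1 (proj2 (proj2 (proj2 (proj2_sig (constructive_indefinite_description _ (step_ex (Os n))) IHn))))).
Qed.

Lemma sq_prop n : step_prop (Os n) (stepf (Os n)).
Proof. exact (proj2_sig (constructive_indefinite_description _ (step_ex (Os n))) (Os_nbhd n)). Qed.

Lemma Os_dec n k : forall x, Os (n + k) x -> Os n x.
Proof.
induction k; intros x H.
- rewrite PeanoNat.Nat.add_0_r in H. exact H.
- rewrite PeanoNat.Nat.add_succ_r in H. simpl in H. apply IHk.
  exact (proj1 (proj2 (proj2 (proj2 (proj2 (sq_prop (n + k)))))) x H).
Qed.

Lemma sq_lt m n : n < m -> sq m <> sq n.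
Proof.
intros lt E. destruct (proj1 (proj2 (sq_prop m))) as [x hx].
assert (h1 : Os (S n) x).
{ replace m with (S n + (m - S n)) in hx by (apply PeanoNat.Nat.sub_add in lt; rewrite PeanoNat.Nat.add_comm; exact lt).
  apply (Os_dec (S n) (m - S n)). exact (proj1 (proj2 (proj2 (sq_prop _))) x hx). }
unfold sq in E. rewrite E in hx.
exact (proj2 (proj2 (proj2 (proj2 (proj2 (sq_prop n))))) x hx h1).
Qed.

Lemma seq_exists : exists s : nat -> set G, (forall n, N0 (s n)) /\ forall m n, s m = s n -> m = n.
Proof.
exists sq. split; [intro n; exact (proj1 (sq_prop n))|].
intros m n E. destruct (PeanoNat.Nat.lt_total m n) as [h|[h|h]].
- exfalso. apply (sq_lt n m h). symmetry; exact E.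
- exact h.
- exfalso. apply (sq_lt m n h). exact E.
Qed.
End Seq.

Variable f : G -> G.
Hypothesis Hf : automorphism mul f.
Hypothesis Hfc : continuous T f.
Variable U1 : set G.
Hypothesis TU1 : T U1.
Hypothesis U1e : U1 e.
Variable N0 : set (set G).
Hypothesis HN0 : is_network T N0.

Lemma f_e : f e = e.
Proof.
symmetry. apply (g_lcan _ _ _ _ Hgrp (f e)). rewrite (g_idr _ _ _ _ Hgrp).
rewrite <- (proj1 Hf). rewrite (g_idl _ _ _ _ Hgrp). reflexivity.
Qed.

Inductive code : Type :=
| cU1 | cSep (b : set G) | cHalf (c : code) | cConj (c : code) (b : set G)
| cF (c : code) | cInt (c1 c2 : code).

Fixpoint sem (c : code) : set G :=
  match c with
  | cU1 => U1
  | cSep b => sepset b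
  | cHalf c => half (sem c)
  | cConj c b => conjset (half (half (sem c))) (pick b)
  | cF c => fun u => sem c (f u)
  | cInt c1 c2 => fun x => sem c1 x /\ sem c2 x
  end.

Fixpoint valid (c : code) : Prop :=
  match c with
  | cU1 => True
  | cSep b => N0 b
  | cHalf c => valid c
  | cConj c b => valid c /\ N0 b
  | cF c => valid c
  | cInt c1 c2 => valid c1 /\ valid c2
  end.

Lemma sem_nbhd c : nbhd (sem c).
Proof.
induction c; simpl.
- split; assumption.
- apply sepset_nbhd.
- apply half_nbhd.
- apply conjset_nbhd. apply half_nbhd.
- destruct IHc as [TV Ve]. split.
  + apply Hfc. exact TV.
  + rewrite f_e. exact Ve.
- destruct IHc1, IHc2. split; [apply open_inter; assumption|split; assumption].
Qed.

Lemma sem_e c : sem c e.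
Proof. exact (proj2 (sem_nbhd c)). Qed.

Lemma half_code c : HP (sem c) (sem (cHalf c)).
Proof. apply half_prop. apply sem_nbhd. Qed.

Lemma half_code_sub c a : sem (cHalf c) a -> sem c a.
Proof. apply half_sub. apply sem_nbhd. Qed.

Lemma conj_code c g : valid c -> exists c', valid c' /\ forall u, sem c' u ->
   sem c (mul g (mul u (inv g))) /\ sem c (mul g (mul (inv u) (inv g))).
Proof.
intro vc.
set (V := sem c). set (V1 := half V). set (V2 := half V1).
assert (NV : nbhd V) by apply sem_nbhd.
assert (NV1 : nbhd V1) by apply half_nbhd.
assert (NV2 : nbhd V2) by apply half_nbhd.
assert (trip : forall a b c0, V2 a -> V2 b -> V2 c0 -> V (mul a (mul b (inv c0)))).
{ intros a b c0 Ha Hb Hc. destruct (half_prop V1 NV1 b c0 Hb Hc) as [_ [H1 _]].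
  apply (half_prop V NV a _ (half_sub V1 NV1 a Ha) H1). }
pose (O := fun z => V2 (mul g (inv z))).
assert (TO : T O).
{ apply (open_inv (fun y => V2 (mul g y))). apply open_ltr. exact (proj1 NV2). }
assert (Og : O g) by (unfold O; rewrite (g_invr _ _ _ _ Hgrp); exact (proj2 NV2)).
destruct (HN0 O g TO Og) as [b [Nb [bg bO]]].
exists (cConj c b). split; [split; assumption|].
intros u [H1 H2]. fold V V1 V2 in H1, H2.
set (d := pick b) in *.
assert (Hw : V2 (mul g (inv d))) by (apply bO; apply pick_in; exists g; exact bg).
split.
- replace (mul g (mul u (inv g))) with
     (mul (mul g (inv d)) (mul (mul d (mul u (inv d))) (inv (mul g (inv d))))) by (gs Hgrp; reflexivity).
  apply trip; assumption.
- replace (mul g (mul (inv u) (inv g))) with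
     (mul (mul g (inv d)) (mul (mul d (mul (inv u) (inv d))) (inv (mul g (inv d))))) by (gs Hgrp; reflexivity).
  apply trip; assumption.
Qed.

Lemma sep_code g : g <> e -> exists c, valid c /\ ~ sem c g.
Proof.
intro ne.
destruct (HH e g (fun h => ne (eq_sym h))) as [O [W [TO [TW [Oe [Wg D]]]]]].
destruct (HN0 W g TW Wg) as [b [Nb [bg bW]]].
exists (cSep b). split; [exact Nb|]. simpl.
apply sepset_prop; [|exact bg].
exists O. split; [split; assumption|]. intros x bx Ox. apply (D x). split; [exact Ox|apply bW; exact bx].
Qed.

Definition T' (W : set G) := forall x, W x -> exists c, valid c /\ forall u, sem c u -> W (mul x u).
Definition IntS x c : set G := fun z => exists c', valid c' /\ forall w, sem c' w -> sem c (mul (inv x) (mul z w)).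

Lemma IntS_open x c : T' (IntS x c).
Proof.
intros z [c' [vc' H]]. exists (cHalf c'). split; [exact vc'|].
intros u Hu. exists (cHalf c'). split; [exact vc'|]. intros w Hw.
replace (mul (inv x) (mul (mul z u) w)) with (mul (inv x) (mul z (mul u w))) by (gs Hgrp; reflexivity).
apply H. exact (proj1 (half_code c' u w Hu Hw)).
Qed.

Lemma IntS_center x c : valid c -> IntS x c x.
Proof. intro vc. exists c. split; [exact vc|]. intros w Hw. gs Hgrp. exact Hw. Qed.

Lemma IntS_sub x c z : IntS x c z -> sem c (mul (inv x) z).
Proof.
intros [c' [_ H]]. pose proof (H e (sem_e c')) as H'. rewrite (g_idr _ _ _ _ Hgrp) in H'. exact H'.
Qed.

Lemma T'_top : is_topology T'.
Proof.
split; [|split].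
- intros x _. exists cU1. split; [exact I|]. intros; exact I.
- intros F HF x [U [FU Ux]]. destruct (HF U FU x Ux) as [c [vc H]].
  exists c. split; [exact vc|]. intros u Hu. exists U. split; [exact FU|apply H; exact Hu].
- intros U V TU TV x [Ux Vx]. destruct (TU x Ux) as [c1 [v1 H1]]. destruct (TV x Vx) as [c2 [v2 H2]].
  exists (cInt c1 c2). split; [split; assumption|]. intros u [h1 h2]. split; auto.
Qed.

Lemma T'_sub W : T' W -> T W.
Proof.
intro HW. apply open_local. intros x Wx. destruct (HW x Wx) as [c [vc H]].
exists (fun z => sem c (mul (inv x) z)). split; [|split].
- apply open_ltr. exact (proj1 (sem_nbhd c)).
- rewrite (g_invl _ _ _ _ Hgrp). apply sem_e.
- intros y Hy. pose proof (H _ Hy) as H'. rewrite (g_cancr _ _ _ _ Hgrp) in H'. exact H'.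
Qed.

Lemma T'_group : group_topology mul inv T'.
Proof.
split; [exact T'_top|split].
- intros x y W TW Wxy. destruct (TW _ Wxy) as [c [vc Hc]].
  destruct (conj_code (cHalf c) (inv y) vc) as [c2 [vc2 Hc2]].
  exists (IntS x c2), (IntS y (cHalf c)). split; [apply IntS_open|]. split; [apply IntS_open|].
  split; [apply IntS_center; exact vc2|]. split; [apply IntS_center; exact vc|].
  intros a b Ha Hb. apply IntS_sub in Ha. apply IntS_sub in Hb.
  destruct (Hc2 _ Ha) as [H1 _].
  pose proof (proj1 (half_code c _ _ H1 Hb)) as H3.
  pose proof (Hc _ H3) as H4.
  replace (mul a b) with (mul (mul x y) (mul (mul (inv y) (mul (mul (inv x) a) (inv (inv y)))) (mul (inv y) b)))
    by (gs Hgrp; reflexivity).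
  exact H4.
- intros W TW z Wz. destruct (TW _ Wz) as [c [vc Hc]].
  destruct (conj_code c z vc) as [c2 [vc2 Hc2]].
  exists c2. split; [exact vc2|]. intros u Hu.
  destruct (Hc2 u Hu) as [_ H2]. pose proof (Hc _ H2) as H3.
  replace (inv (mul z u)) with (mul (inv z) (mul z (mul (inv u) (inv z)))) by (gs Hgrp; reflexivity).
  exact H3.
Qed.

Lemma T'_haus : hausdorff T'.
Proof.
intros x y nxy.
assert (ne : mul (inv x) y <> e).
{ intro h. apply nxy. rewrite <- (g_cancr _ _ _ _ Hgrp x y). rewrite h. rewrite (g_idr _ _ _ _ Hgrp). reflexivity. }
destruct (sep_code _ ne) as [c [vc Hc]].
exists (IntS x (cHalf c)), (IntS y (cHalf c)).
split; [apply IntS_open|]. split; [apply IntS_open|].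
split; [apply IntS_center; exact vc|]. split; [apply IntS_center; exact vc|].
intros z [Hx Hy]. apply IntS_sub in Hx. apply IntS_sub in Hy.
destruct (half_code c _ _ Hx Hy) as [_ [H _]]. apply Hc.
replace (mul (inv x) y) with (mul (mul (inv x) z) (inv (mul (inv y) z))) by (gs Hgrp; reflexivity).
exact H.
Qed.

Definition Bs (W : set G) := exists b c, N0 b /\ valid c /\ W = IntS (pick b) c.

Lemma Bs_base : is_base T' Bs.
Proof.
split.
- intros W [b [c [_ [_ ->]]]]. apply IntS_open.
- intros W x TW Wx. destruct (TW x Wx) as [c [vc Hc]].
  set (c1 := cHalf c). set (c2 := cHalf c1).
  assert (TO : T (IntS x c2)) by (apply T'_sub; apply IntS_open).
  destruct (HN0 _ x TO (IntS_center x c2 vc)) as [b [Nb [bx bO]]].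
  set (d := pick b).
  assert (Hd : IntS x c2 d) by (apply bO; apply pick_in; exists x; exact bx).
  apply IntS_sub in Hd.
  exists (IntS d c1). split; [exists b, c1; split; [exact Nb|split; [exact vc|reflexivity]]|].
  split.
  + exists c2. split; [exact vc|]. intros w Hw.
    destruct (half_code c1 _ _ Hd Hw) as [_ [_ H]].
    replace (mul (inv d) (mul x w)) with (mul (inv (mul (inv x) d)) w) by (gs Hgrp; reflexivity).
    exact H.
  + intros z Hz. apply IntS_sub in Hz.
    pose proof (half_code_sub c1 _ Hd) as Hd1.
    destruct (half_code c _ _ Hd1 Hz) as [H _].
    pose proof (Hc _ H) as H'.
    replace z with (mul x (mul (mul (inv x) d) (mul (inv d) z))) by (gs Hgrp; reflexivity).
    exact H'.
Qed.

Lemma f_cont' : continuous T' f.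
Proof.
intros W TW x Wfx. destruct (TW _ Wfx) as [c [vc Hc]].
exists (cF c). split; [exact vc|]. intros u Hu. simpl in Hu.
rewrite (proj1 Hf). apply Hc. exact Hu.
Qed.

Hypothesis HU1 : forall O, T O -> O e -> ~ (forall y, O y -> exists x, U1 x /\ f x = y).

Lemma f_not_open' : ~ open_map T' f.
Proof.
intro Hop.
pose (W0 := IntS e cU1).
pose proof (Hop W0 (IntS_open e cU1)) as H.
apply T'_sub in H.
apply (HU1 _ H).
- exists e. split; [apply IntS_center; exact I|apply f_e].
- intros y [x [Wx <-]]. exists x. split; [|reflexivity].
  apply IntS_sub in Wx. rewrite (g_inv_e _ _ _ _ Hgrp), (g_idl _ _ _ _ Hgrp) in Wx. exact Wx.
Qed.

Variable p : set G -> set G -> set G.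
Hypothesis pN : forall a b, N0 a -> N0 b -> N0 (p a b).
Hypothesis pinj : forall a b a' b', N0 a -> N0 b -> N0 a' -> N0 b' -> p a b = p a' b' -> a = a' /\ b = b'.
Variable sq : nat -> set G.
Hypothesis sN : forall n, N0 (sq n).
Hypothesis sinj : forall m n, sq m = sq n -> m = n.

Fixpoint enc (c : code) : set G :=
  match c with
  | cU1 => p (sq 0) (sq 0)
  | cSep b => p (sq 1) b
  | cHalf c => p (sq 2) (enc c)
  | cConj c b => p (sq 3) (p (enc c) b)
  | cF c => p (sq 4) (enc c)
  | cInt c1 c2 => p (sq 5) (p (enc c1) (enc c2))
  end.

Lemma enc_N0 c : valid c -> N0 (enc c).
Proof.
induction c; simpl; intro v; try destruct v; repeat apply pN; auto.
Qed.

Lemma enc_inj c1 : forall c2, valid c1 -> valid c2 -> enc c1 = enc c2 -> c1 = c2.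
Proof.
induction c1; intros c2 v1 v2 E; destruct c2; simpl in v1, v2, E;
  apply pinj in E; try (destruct v1); try (destruct v2); repeat apply pN; try apply enc_N0; auto;
  destruct E as [E1 E2]; apply sinj in E1; try discriminate;
  first [ reflexivity | (rewrite E2; reflexivity) | (f_equal; apply IHc1; assumption)
        | (apply pinj in E2; try apply enc_N0; auto; destruct E2 as [E2 E3]; f_equal; auto) ].
Qed.

Lemma card_Bs (N : set (set G)) (g0 : set G -> set G)
  (g0N : forall b, N0 b -> N (g0 b)) (g0inj : forall a b, N0 a -> N0 b -> g0 a = g0 b -> a = b) :
  card_le Bs N.
Proof.
assert (Hch : forall W, Bs W -> { bc : set G * code | N0 (fst bc) /\ valid (snd bc) /\ W = IntS (pick (fst bc)) (snd bc) }).
{ intros W HW. apply constructive_indefinite_description.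
  destruct HW as [b [c [Nb [vc EW]]]]. exists (b, c). simpl. auto. }
pose (F := fun w : {W | Bs W} => g0 (p (fst (proj1_sig (Hch _ (proj2_sig w)))) (enc (snd (proj1_sig (Hch _ (proj2_sig w))))))).
assert (FN : forall w, N (F w)).
{ intro w. unfold F. destruct (proj2_sig (Hch _ (proj2_sig w))) as [Nb [vc _]].
  apply g0N. apply pN; [exact Nb|apply enc_N0; exact vc]. }
exists (fun w => exist _ (F w) (FN w)).
intros w w' E. injection E as E. unfold F in E.
destruct w as [W hW], w' as [W' hW']. simpl in E.
destruct (proj2_sig (Hch W hW)) as [Nb [vc EW]]. destruct (proj2_sig (Hch W' hW')) as [Nb' [vc' EW']].
apply g0inj in E; [|apply pN; [exact Nb|apply enc_N0; exact vc]|apply pN; [exact Nb'|apply enc_N0; exact vc']].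
apply pinj in E; [|exact Nb|apply enc_N0; exact vc|exact Nb'|apply enc_N0; exact vc'].
destruct E as [Eb Ec]. apply enc_inj in Ec; [|exact vc|exact vc'].
assert (EE : W = W') by (rewrite EW, EW', Eb, Ec; reflexivity).
subst W'. f_equal. apply proof_irrelevance.
Qed.

End Top.

Theorem theorem6p4 (G : Type) (mul : G -> G -> G) (inv : G -> G) (e : G)
  (Hgrp : is_group mul inv e)
  (T : set (set G)) (HT : group_topology mul inv T) (HH : hausdorff T)
  (Hnr : ~ g_reversible mul T) :
  exists T' : set (set G),
    group_topology mul inv T' /\ hausdorff T' /\
    (exists B, is_base T' B /\ forall N, is_network T N -> card_le B N) /\
    ~ g_reversible mul T'.
Proof.
destruct (get_U1 G mul inv e Hgrp T HT Hnr) as [f [Hf [Hfc [U1 [TU1 [U1e HU1]]]]]].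
assert (TN : is_network T T) by (intros U x TU Ux; exists U; split; [exact TU|split; [exact Ux|intros y h; exact h]]).
destruct (min_card {N : set (set G) | is_network T N} (set G) (fun N => proj1_sig N) (exist _ T TN))
  as [[N0 HN0] Hmin].
assert (ND : forall O, T O -> O e -> exists x, O x /\ x <> e).
{ intros O TO Oe. apply NNPP; intro H. apply (HU1 O TO Oe). intros y Oy.
  assert (ye : y = e) by (apply NNPP; intro ne; apply H; exists y; split; assumption).
  subst y. exists e. split; [exact U1e|]. apply (f_e G mul inv e Hgrp f Hf). }
destruct (seq_exists G mul inv e T HT HH N0 HN0 ND) as [s [sN sinj]].
destruct (hess_main (set G) N0 s sN sinj) as [p [pN pinj]].
exists (T' G mul inv e T f U1 N0).
split; [apply T'_group; assumption|].
split; [apply T'_haus; assumption|].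
split.
- exists (Bs G mul inv e T f U1 N0). split; [apply Bs_base; assumption|].
  intros N HN. destruct (Hmin (exist _ N HN)) as [g0 [g0N g0inj]]. simpl in g0N, g0inj.
  exact (card_Bs G mul inv e T f U1 N0 p pN pinj s sN sinj N g0 g0N g0inj).
- intro Hr. apply (f_not_open' G mul inv e Hgrp T HT f Hf Hfc U1 TU1 U1e N0 HU1).
  apply Hr; [exact Hf|apply f_cont'; exact Hf].
Qed.
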